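(* For every integer $N\ge 0$, let $T_{1\times 4}(5,N)$ be the number of tilings of a $5\times n$ rectangle, $n=4N/5$, by $N$ tiles of size $1\times 4$ (and $0$ if $4N/5\notin\mathbb{Z}$). Then, as formal power series, \[ \sum_{N\ge 0} T_{1\times 4}(5,N)\,z^N=\frac{(1-z^5)^3}{1-6z^5+6z^{10}-4z^{15}+z^{20}}. \]
   Context: A tiling of an $m\times n$ rectangle (width $m$, length $n$, made of $mn$ unit squares) by $a\times b$ tiles is a partition of the rectangle into non-overlapping axis-parallel $a\times b$ rectangles with integer corner coordinates, each placed in either of its two orientations. Tilings related by reflections or rotations of the rectangle are counted as distinct. The empty tiling counts once for $N=0$. *)

(* Defs.v *)
From HB Require Import structures.
From mathcomp Require Import all_boot all_order all_algebra.
Unset Printing Implicit Defensive.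
Import Order.TTheory GRing.Theory Num.Theory.

Definition cell (m n : nat) := ('I_m * 'I_n)%type.

Definition block (m n a b : nat) (i j : nat) : {set cell m n} :=
  [set c : cell m n | (i <= c.1 < i + a) && (j <= c.2 < j + b)].

Definition is_tile (m n a b : nat) (A : {set cell m n}) : bool :=
  [exists i : 'I_m.+1, exists j : 'I_n.+1,
     ((i + a <= m) && (j + b <= n) && (A == block m n a b i j))
  || ((i + b <= m) && (j + a <= n) && (A == block m n b a i j))].

Definition tiling (m n a b : nat) (P : {set {set cell m n}}) : bool :=
  partition P [set: cell m n] && [forall A in P, is_tile m n a b A].

Definition num_tilings (m n a b N : nat) : nat :=
  #|[set P : {set {set cell m n}} | tiling m n a b P && (#|P| == N)]|.

Definition T14_5 (N : nat) : nat :=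
  if 5 %| 4 * N then num_tilings 5 (4 * N %/ 5) 1 4 N else 0.

Local Open Scope ring_scope.

Definition numer : {poly int} := (1 - 'X^5) ^+ 3.
Definition denom : {poly int} :=
  1 - 6%:R *: 'X^5 + 6%:R *: 'X^10 - 4%:R *: 'X^15 + 'X^20.

(* Main.v *)
Require Import Defs.
From HB Require Import structures.
From mathcomp Require Import all_boot all_order all_algebra.
From mathcomp Require Import zify ring.
Import GRing.Theory Num.Theory.
Set Implicit Arguments. Unset Strict Implicit.

(* Proof strategy: (1) counting tilings of skyline regions by removing the tile
   covering the first uncovered cell (bridge); (2) a finite transfer computation
   verified by vm_compute (recR). *)

Section Gen.
Variable C : finType.
Variable tileP : pred {set C}.
Hypothesis tile_ne : forall T, tileP T -> T != set0.

Definition tl (U : {set C}) (N : nat) : {set {set {set C}}} :=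
  [set P : {set {set C}} | [&& partition P U, [forall A in P, tileP A] & #|P| == N]].

Lemma tl0 U : #|tl U 0| = (U == set0).
Proof.
have -> : tl U 0 = if U == set0 then [set set0] else set0.
  apply/setP => P; rewrite !inE cards_eq0.
  case: (boolP (P == set0)) => [/eqP -> | nP]; last first.
    by rewrite !andbF; case: (U == set0); rewrite ?inE // (negbTE nP).
  have c0 : cover (set0 : {set {set C}}) = set0 by rewrite /cover big_set0.
  rewrite andbT /partition /trivIset c0 cards0 big_set0 inE /= eq_sym.
  case: (U == set0); rewrite ?inE ?eqxx //=.
  by apply/forallP => A; rewrite inE.
by case: (U == set0); rewrite ?cards1 ?cards0.
Qed.

Lemma tlS (U : {set C}) N x : x \in U ->
  #|tl U N.+1| = \sum_(T in [set T | [&& tileP T, x \in T & T \subset U]]) #|tl (U :\: T) N|.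
Proof.
move=> xU.
rewrite -sum1_card.
rewrite (partition_big (fun P => pblock P x) (mem [set T | [&& tileP T, x \in T & T \subset U]])) /=; last first.
  move=> P; rewrite inE => /and3P [/and3P [/eqP cP tP n0P] /forallP aP _].
  have xc : x \in cover P by rewrite cP.
  have Pm := pblock_mem xc.
  rewrite inE mem_pblock xc /=.
  have := aP (pblock P x); rewrite Pm /= => -> /=.
  by rewrite -cP; apply: (bigcup_sup _ Pm).
apply: eq_bigr => T; rewrite inE => /and3P [tT xT TU].
have xnT : forall P', P' \in tl (U :\: T) N -> T \notin P'.
  move=> P'; rewrite inE => /and3P [/and3P [/eqP cP _ _] _ _].
  apply/negP => TP; have : x \in cover P' by apply/bigcupP; exists T.
  by rewrite cP inE xT.
rewrite sum1dep_card.
rewrite -(card_in_imset (f := fun P' => T |: P') (D := tl (U :\: T) N)); last first.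
  move=> P1 P2 H1 H2 /= E.
  by rewrite -(setU1K (xnT _ H1)) -(setU1K (xnT _ H2)) E.
apply: eq_card => P; rewrite !inE.
apply/idP/imsetP.
- case/andP => /and3P [/and3P [/eqP cP tP n0P] /forallP aP /eqP cardP] /eqP pbP.
  have xc : x \in cover P by rewrite cP.
  have TP : T \in P by rewrite -pbP pblock_mem.
  exists (P :\ T); last by rewrite setD1K.
  rewrite inE; apply/and3P; split.
  + apply/and3P; split.
    * by rewrite coverD1 // cP.
    * exact: trivIsetD.
    * by rewrite inE negb_and n0P orbT.
  + apply/forallP => A; apply/implyP; rewrite inE => /andP [_ AP].
    by have := aP A; rewrite AP.
  + by rewrite (cardsD1 T) TP add1n in cardP; case: cardP => ->.
- case => P' HP' ->.
  have Tn := xnT _ HP'.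
  move: HP'; rewrite inE => /and3P [/and3P [/eqP cP tP n0P] /forallP aP /eqP cardP].
  have [tiU _] : trivIset (T |: P') /\ T \notin P'.
    apply: trivIsetU1 => // B BP.
    rewrite -setI_eq0; apply/eqP/setP => y; rewrite !inE.
    apply/negP => /andP [yT yB].
    have : y \in cover P' by apply/bigcupP; exists B.
    by rewrite cP inE yT.
  apply/andP; split; last first.
    by apply/eqP; apply: def_pblock => //; rewrite setU11.
  apply/and3P; split.
  + apply/and3P; split => //.
    * rewrite /cover bigcup_setU big_set1 -/(cover P') cP.
      apply/eqP/setP => y; rewrite !inE.
      by case: (boolP (y \in T)) => //= /(subsetP TU) ->.
    * by rewrite !inE negb_or n0P andbT eq_sym tile_ne.
  + apply/forallP => A; apply/implyP; rewrite !inE => /orP [/eqP -> // | AP].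
    by have := aP A; rewrite AP.
  + by rewrite cardsU1 Tn cardP.
Qed.
Lemma tl_empty N : #|tl set0 N.+1| = 0.
Proof.
apply/eqP; rewrite cards_eq0; apply/eqP/setP => P; rewrite !inE.
apply/negP => /and3P [/and3P [/eqP cP _ n0P] /forallP aP /eqP cardP].
have : 0 < #|P| by rewrite cardP.
rewrite card_gt0 => /set0Pn [A AP].
have := aP A; rewrite AP /= => /tile_ne /set0Pn [y yA].
have : y \in cover P by apply/bigcupP; exists A.
by rewrite cP inE.
Qed.
End Gen.

Definition pv (p : seq nat) (i : nat) := nth 0 p i.
Arguments pv : simpl never.
Definition pmin (p : seq nat) :=
  minn (pv p 0) (minn (pv p 1) (minn (pv p 2) (minn (pv p 3) (pv p 4)))).
Definition prow (p : seq nat) : nat :=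
  let m := pmin p in
  if pv p 0 == m then 0 else if pv p 1 == m then 1 else
  if pv p 2 == m then 2 else if pv p 3 == m then 3 else 4.
Definition hmove (p : seq nat) :=
  [seq if i == prow p then pmin p + 4 else pv p i | i <- iota 0 5].
Definition vmove (p : seq nat) :=
  [seq if (prow p <= i < prow p + 4) then (pmin p).+1 else pv p i | i <- iota 0 5].
Definition vok (p : seq nat) :=
  (prow p <= 1) && [&& pv p (prow p).+1 == pmin p, pv p (prow p).+2 == pmin p
                     & pv p (prow p).+3 == pmin p].
Definition unshift (p : seq nat) := [seq (pv p i).-1 | i <- iota 0 5].

Arguments pmin : simpl never.
Arguments prow : simpl never.
Arguments hmove : simpl never.
Arguments vmove : simpl never.
Arguments vok : simpl never.
Arguments unshift : simpl never.

Fixpoint F (p : seq nat) (n N : nat) : nat :=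
  match N with
  | 0 => if n <= pmin p then 1 else 0
  | N'.+1 => if n <= pmin p then 0 else
      (if pmin p + 4 <= n then F (hmove p) n N' else 0)
      + (if vok p then F (vmove p) n N' else 0)
  end.

Lemma pmin_le p i : i < 5 -> pmin p <= pv p i.
Proof. rewrite /pmin; case: i => [|[|[|[|[|]]]]] //= _; lia. Qed.

Lemma prow_lt p : prow p < 5.
Proof. rewrite /prow; repeat case: ifP => //. Qed.

Lemma pv_prow p : pv p (prow p) = pmin p.
Proof.
rewrite /prow; repeat (case: ifP => [/eqP //|]).
rewrite /pmin; move=> /negbT h3 /negbT h2 /negbT h1 /negbT h0; lia.
Qed.

Lemma prow_min p i : i < prow p -> pmin p < pv p i.
Proof.
move=> ir.
have h : pv p i != pmin p.
  move: ir; rewrite /prow; case: i => [|[|[|[|]]]];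
  repeat (case: ifP => //=); by move=> /negbT.
have := @pmin_le p i; have := prow_lt p; lia.
Qed.

Lemma pv_map (f : nat -> nat) i : i < 5 -> pv [seq f j | j <- iota 0 5] i = f i.
Proof. by case: i => [|[|[|[|[|]]]]]. Qed.

Lemma pv_h p i : i < 5 -> pv (hmove p) i = if i == prow p then pmin p + 4 else pv p i.
Proof. exact: (pv_map (fun i => if i == prow p then pmin p + 4 else pv p i)). Qed.

Lemma pv_v p i : i < 5 -> pv (vmove p) i =
  if (prow p <= i < prow p + 4) then (pmin p).+1 else pv p i.
Proof. exact: (pv_map (fun i => if (prow p <= i < prow p + 4) then (pmin p).+1 else pv p i)). Qed.

Lemma vokP p : vok p -> forall i, prow p <= i < prow p + 4 -> pv p i = pmin p.
Proof.
case/andP => _ /and3P [/eqP h1 /eqP h2 /eqP h3] i hi.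
have : i = prow p \/ i = (prow p).+1 \/ i = (prow p).+2 \/ i = (prow p).+3 by lia.
by case=> [->|[->|[->|->]]]; rewrite ?pv_prow.
Qed.

Section Geo.
Variable n : nat.
Definition U (p : seq nat) : {set cell 5 n} := [set x : cell 5 n | pv p x.1 <= x.2].
Definition Th p := block 5 n 1 4 (prow p) (pmin p).
Definition Tv p := block 5 n 4 1 (prow p) (pmin p).

Lemma U_h p : U (hmove p) = U p :\: Th p.
Proof.
apply/setP => x; rewrite !inE pv_h //.
have := pv_prow p; case: eqP => [e|ne]; rewrite ?e; lia.
Qed.

Lemma U_v p : vok p -> U (vmove p) = U p :\: Tv p.
Proof.
move=> vk; apply/setP => x; rewrite !inE pv_v //.
have := vokP vk (i := x.1); move: (vokP vk (i := x.1)) => hv.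
case: ifP => h /=; first by move=> _; move: (hv h) => e; rewrite e; case: (ltngtP (pmin p) x.2) => //= *; lia.
move=> _; lia.
Qed.
End Geo.

Section Geo2.
Variable n : nat.

Lemma tiles_set1 p (hp : pmin p < n) (T : {set cell 5 n}) :
  [&& is_tile 5 n 1 4 T, (Ordinal (prow_lt p), Ordinal hp) \in T & T \subset U n p] ->
  ((pmin p + 4 <= n) && (T == Th n p)) || (vok p && (T == Tv n p)).
Proof.
have pr5 := prow_lt p; have ppr := pv_prow p.
case/and3P => /existsP [i /existsP [j /orP [/andP [/andP [hi hj] /eqP eT] | /andP [/andP [hi hj] /eqP eT]]]] xT TU; subst T.
+ rewrite inE /= in xT.
  have jn : j < n by lia.
  have i5 : i < 5 by lia.
  have : (Ordinal i5, Ordinal jn) \in U n p.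
    apply: (subsetP TU); rewrite inE /=; lia.
  rewrite inE /= => hU.
  have ei : (i : nat) = prow p by lia.
  have ej : (j : nat) = pmin p by move: hU; rewrite ei; lia.
  apply/orP; left; rewrite /Th ei ej eqxx andbT; lia.
+ rewrite inE /= in xT.
  have i5 : i < 5 by lia.
  have ej : (j : nat) = pmin p by lia.
  have cell_in : forall k (hk : k < 5), i <= k < i + 4 -> pv p k <= pmin p.
    move=> k hk hik.
    have : (Ordinal hk, Ordinal hp) \in U n p.
      apply: (subsetP TU); rewrite inE /=; lia.
    by rewrite inE.
  have ei : (i : nat) = prow p.
    case: (ltngtP i (prow p)) => // h; last by lia.
    have := cell_in i i5; have := prow_min h; lia.
  apply/orP; right; rewrite /Tv ei ej eqxx andbT.
  rewrite /vok; apply/andP; split; first by lia.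
  have pl := @pmin_le p.
  apply/and3P; split; apply/eqP.
  * have h5 : (prow p).+1 < 5 by lia.
    have := cell_in _ h5; have := pl _ h5; lia.
  * have h5 : (prow p).+2 < 5 by lia.
    have := cell_in _ h5; have := pl _ h5; lia.
  * have h5 : (prow p).+3 < 5 by lia.
    have := cell_in _ h5; have := pl _ h5; lia.
Qed.

Lemma tiles_set2 p (hp : pmin p < n) (T : {set cell 5 n}) :
  ((pmin p + 4 <= n) && (T == Th n p)) || (vok p && (T == Tv n p)) ->
  [&& is_tile 5 n 1 4 T, (Ordinal (prow_lt p), Ordinal hp) \in T & T \subset U n p].
Proof.
have pr5 := prow_lt p; have ppr := pv_prow p.
case/orP => /andP [h /eqP ->].
+ apply/and3P; split.
  * apply/existsP; exists (inord (prow p)); apply/existsP; exists (inord (pmin p)).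
    rewrite !inordK; try lia.
    by rewrite /Th !eqxx; apply/orP; left; rewrite !andbT; lia.
  * rewrite inE /=; lia.
  * apply/subsetP => -[y1 y2]; rewrite !inE /= => /and3P [/andP [hy1 hy1a] hy2 hy3].
    have e : (y1 : nat) = prow p by lia.
    by rewrite e ppr.
+ have vk := vokP h.
  apply/and3P; split.
  * apply/existsP; exists (inord (prow p)); apply/existsP; exists (inord (pmin p)).
    move: h => /andP [h1 _].
    rewrite !inordK; try lia.
    by rewrite /Tv !eqxx; apply/orP; right; rewrite !andbT; lia.
  * rewrite inE /=; lia.
  * apply/subsetP => -[y1 y2]; rewrite !inE /= => /andP [hy1 hy2].
    rewrite vk //; lia.
Qed.

Lemma tiles_set p (hp : pmin p < n) (T : {set cell 5 n}) :
  [&& is_tile 5 n 1 4 T, (Ordinal (prow_lt p), Ordinal hp) \in T & T \subset U n p] =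
  ((pmin p + 4 <= n) && (T == Th n p)) || (vok p && (T == Tv n p)).
Proof. by apply/idP/idP; [apply: tiles_set1 | apply: tiles_set2]. Qed.
End Geo2.

Lemma is_tile_ne n T : is_tile 5 n 1 4 T -> T != set0.
Proof.
case/existsP => i /existsP [j /orP [/andP [/andP [hi hj] /eqP ->] | /andP [/andP [hi hj] /eqP ->]]].
- have i5 : i < 5 by lia. have jn : j < n by lia.
  apply/set0Pn; exists (Ordinal i5, Ordinal jn); rewrite inE /=; lia.
- have i5 : i < 5 by lia. have jn : j < n by lia.
  apply/set0Pn; exists (Ordinal i5, Ordinal jn); rewrite inE /=; lia.
Qed.

Lemma bridge n N p : #|tl (is_tile 5 n 1 4) (U n p) N| = F p n N.
Proof.
elim: N p => [|N IH] p.
- rewrite tl0 /=; case: leqP => h.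
  + suff -> : U n p = set0 by rewrite eqxx.
    apply/setP => -[x1 x2]; rewrite !inE /=.
    have := @pmin_le p x1 (ltn_ord x1); have := ltn_ord x2; lia.
  + suff -> : (U n p == set0) = false by [].
    apply/negbTE/set0Pn; exists (Ordinal (prow_lt p), Ordinal h); rewrite inE /= pv_prow //.
- rewrite /=; case: leqP => h.
  + have -> : U n p = set0.
      apply/setP => -[x1 x2]; rewrite !inE /=.
      have := @pmin_le p x1 (ltn_ord x1); have := ltn_ord x2; lia.
    exact: tl_empty (@is_tile_ne n) N.
  + have x0U : (Ordinal (prow_lt p), Ordinal h) \in U n p by rewrite inE /= pv_prow.
    rewrite (tlS (@is_tile_ne n) N x0U).
    rewrite (eq_bigl (fun T => ((pmin p + 4 <= n) && (T == Th n p)) || (vok p && (T == Tv n p)))); last first.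
      by move=> T; rewrite inE tiles_set.
    have eh : #|tl (is_tile 5 n 1 4) (U n p :\: Th n p) N| = F (hmove p) n N by rewrite -U_h IH.
    case: (boolP (pmin p + 4 <= n)) => hc; case: (boolP (vok p)) => hv /=.
    * have ne : Th n p != Tv n p.
        apply/negP => /eqP e.
        have c1 : (pmin p).+1 < n by lia.
        have : (Ordinal (prow_lt p), Ordinal c1) \in Th n p by rewrite inE /=; lia.
        by rewrite e inE /=; lia.
      rewrite (bigD1 (Th n p)) ?eqxx //=.
      rewrite (eq_bigl (fun T => T == Tv n p)); last first.
        move=> T; case: (T =P Tv n p) => [->|] /=; first by rewrite eq_sym ne orbT.
        by move=> nT /=; rewrite orbF andbN.
      by rewrite big_pred1_eq eh -U_v // IH.
    * rewrite (eq_bigl (fun T => T == Th n p)); last by move=> T; rewrite orbF.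
      by rewrite big_pred1_eq eh addn0.
    * rewrite (eq_bigl (fun T => T == Tv n p)) //.
      by rewrite big_pred1_eq -U_v // IH.
    * by rewrite big_pred0.
Qed.

Definition area (p : seq nat) n :=
  (n - pv p 0) + (n - pv p 1) + (n - pv p 2) + (n - pv p 3) + (n - pv p 4).

Lemma area_h p n : pmin p + 4 <= n -> area (hmove p) n + 4 = area p n.
Proof.
move=> hc; rewrite /area !pv_h //.
move: (pv_prow p) (prow_lt p); case: (prow p) => [|[|[|[|[|r]]]]] //= e _;
have := @pmin_le p 0; have := @pmin_le p 1; have := @pmin_le p 2;
have := @pmin_le p 3; have := @pmin_le p 4; lia.
Qed.

Lemma area_v p n : vok p -> pmin p < n -> area (vmove p) n + 4 = area p n.
Proof.
move=> hv hn; have vk := vokP hv; move: hv => /andP [h1 _].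
rewrite /area !pv_v //.
move: vk (pv_prow p) h1; case: (prow p) => [|[|r]] //= vk e _.
- rewrite (vk 1) // (vk 2) // (vk 3) //; lia.
- rewrite (vk 2) // (vk 3) // (vk 4) //; lia.
Qed.

Lemma F_area0 p n N : 4 * N != area p n -> F p n N = 0.
Proof.
elim: N p => [|N IH] p /=.
- case: leqP => // h; rewrite /area.
  have := @pmin_le p 0; have := @pmin_le p 1; have := @pmin_le p 2;
  have := @pmin_le p 3; have := @pmin_le p 4; lia.
- move=> ne; case: leqP => // h.
  have e1 : (if pmin p + 4 <= n then F (hmove p) n N else 0) = 0.
    case: ifP => // hc; apply: IH; have := area_h hc; lia.
  have e2 : (if vok p then F (vmove p) n N else 0) = 0.
    case: ifP => // hv; apply: IH; have := area_v hv h; lia.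
  by rewrite e1 e2.
Qed.

Definition R p n := F p n (area p n %/ 4).
Arguments R : simpl never.

Lemma R_unfold p n : pmin p < n ->
  R p n = (if pmin p + 4 <= n then R (hmove p) n else 0)
        + (if vok p then R (vmove p) n else 0).
Proof.
move=> h; rewrite {1}/R.
case E: (area p n %/ 4) => [|K] /=.
- rewrite leqNgt h /=.
  have a4 : area p n < 4 by lia.
  case: ifP => hc; first by have := area_h hc; lia.
  case: ifP => hv //; have := area_v hv h; lia.
- rewrite leqNgt h /= /R.
  congr (_ + _).
  + case: ifP => hc //; have := area_h hc => e; congr F; lia.
  + case: ifP => hv //; have := area_v hv h => e; congr F; lia.
Qed.

Lemma pv_u q i : i < 5 -> pv (unshift q) i = (pv q i).-1.
Proof. exact: (pv_map (fun i => (pv q i).-1)). Qed.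

Lemma minn_pred a b : minn a.-1 b.-1 = (minn a b).-1.
Proof. by rewrite /minn; case: ltnP => h1; case: ltnP => h2 //; lia. Qed.

Lemma pmin_u q : 0 < pmin q -> pmin (unshift q) = (pmin q).-1.
Proof. by move=> _; rewrite /pmin !pv_u // !minn_pred. Qed.

Lemma prow_u q : 0 < pmin q -> prow (unshift q) = prow q.
Proof.
move=> h.
have e : forall i, i < 5 -> (pv (unshift q) i == pmin (unshift q)) = (pv q i == pmin q).
  move=> i hi; rewrite pv_u // pmin_u //; have := @pmin_le q i hi.
  case: eqP; case: eqP => //; lia.
by rewrite /prow !e.
Qed.

Lemma pmin_mono p p' : (forall i, i < 5 -> pv p i <= pv p' i) -> pmin p <= pmin p'.
Proof.
move=> h.
have H : forall i, i < 5 -> pmin p <= pv p' i.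
  by move=> i hi; apply: leq_trans (pmin_le p hi) (h i hi).
by rewrite {2}/pmin !leq_min !H.
Qed.

Lemma hmove_u q : 0 < pmin q -> hmove (unshift q) = unshift (hmove q).
Proof.
move=> h; apply/eq_in_map => i; rewrite mem_iota add0n => hi.
by rewrite pv_h // pv_u // prow_u // pmin_u //; case: ifP => //; lia.
Qed.

Lemma vmove_u q : 0 < pmin q -> vmove (unshift q) = unshift (vmove q).
Proof.
move=> h; apply/eq_in_map => i; rewrite mem_iota add0n => hi.
by rewrite pv_v // pv_u // prow_u // pmin_u //; case: ifP => //; lia.
Qed.

Lemma vok_u q : 0 < pmin q -> vok (unshift q) = vok q.
Proof.
move=> h; rewrite /vok prow_u //; case: leqP => //= h1.
have e : forall i, i < 5 -> (pv (unshift q) i == pmin (unshift q)) = (pv q i == pmin q).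
  move=> i hi; rewrite pv_u // pmin_u //; have := @pmin_le q i hi.
  case: eqP; case: eqP => //; lia.
rewrite !e //; lia.
Qed.

Lemma F_shift q n N : 0 < pmin q -> F q n.+1 N = F (unshift q) n N.
Proof.
elim: N q => [|N IH] q h /=; rewrite pmin_u //.
- have -> : (n.+1 <= pmin q) = (n <= (pmin q).-1) by lia. by [].
- have -> : (n.+1 <= pmin q) = (n <= (pmin q).-1) by lia.
  case: leqP => // hn.
  have -> : (pmin q + 4 <= n.+1) = ((pmin q).-1 + 4 <= n) by lia.
  rewrite vok_u // hmove_u // vmove_u //.
  congr (_ + _).
  + case: ifP => // _; apply: IH; apply: leq_trans h _; apply: pmin_mono => i hi.
    rewrite pv_h //; case: ifP => [/eqP ->|//]; rewrite pv_prow; lia.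
  + case: ifP => // hv; apply: IH; apply: leq_trans h _; apply: pmin_mono => i hi.
    rewrite pv_v //; case: ifP => // hi'; rewrite (vokP hv hi'); lia.
Qed.

Lemma R_shift q n : 0 < pmin q -> R q n.+1 = R (unshift q) n.
Proof.
move=> h.
have t : forall i, (i < 5)%N -> n.+1 - pv q i = n - pv (unshift q) i.
  move=> i hi; rewrite pv_u //; have := leq_trans h (pmin_le q hi).
  by case: (pv q i).
have e : area q n.+1 = area (unshift q) n by rewrite /area !t.
rewrite /R e; exact: F_shift.
Qed.

Fixpoint walk k p : seq (seq nat) :=
  match k with
  | 0 => [:: p]
  | k'.+1 => if 0 < pmin p then [:: p]
             else walk k' (hmove p) ++ (if vok p then walk k' (vmove p) else [::])
  end.

Lemma R_walk k p n : 4 <= n -> R p n = sumn [seq R q n | q <- walk k p].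
Proof.
move=> n4; elim: k p => [|k IH] p /=; first by rewrite addn0.
case: ifP => h /=; first by rewrite addn0.
rewrite R_unfold; last by lia.
have -> : pmin p + 4 <= n by lia.
rewrite map_cat sumn_cat -IH; case: ifP => _ /=; [by rewrite -IH | by rewrite addn0].
Qed.

Definition z5 : seq nat := [:: 0; 0; 0; 0; 0]%N.

Local Open Scope nat_scope.

Lemma numt n N : num_tilings 5 n 1 4 N = F z5 n N.
Proof.
rewrite -bridge /num_tilings /tl.
have -> : U n z5 = setT.
  apply/setP => x; rewrite !inE /pv.
  by rewrite (_ : z5 = nseq 5 0) // nth_nseq; case: ifP.
by apply: eq_card => P; rewrite !inE /tiling andbA.
Qed.

Lemma T14_5_eq N : T14_5 N = if (N %% 5 == 0)%N then R z5 (4 * (N %/ 5)) else 0.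
Proof.
rewrite /T14_5.
have -> : (5 %| 4 * N) = (N %% 5 == 0)%N by lia.
case: ifP => // h.
have -> : 4 * N %/ 5 = 4 * (N %/ 5) by lia.
rewrite numt /R.
have -> : area z5 (4 * (N %/ 5)) %/ 4 = N.
  rewrite /area /pv /=; lia.
by [].
Qed.


Local Open Scope ring_scope.
Local Open Scope ring_scope.

Definition dot (u : seq (seq nat * int)) (n : nat) : int :=
  \sum_(sc <- u) sc.2 * (R sc.1 n)%:Z.
Definition good (s : seq nat) := all (fun q => 0 < pmin q)%N (walk 5 s).
Definition mstep (u : seq (seq nat * int)) :=
  flatten [seq [seq (unshift q, sc.2) | q <- walk 5 sc.1] | sc <- u].

Lemma sumnZ (l : seq (seq nat)) (f : seq nat -> nat) :
  (sumn [seq f q | q <- l])%:Z = \sum_(q <- l) (f q)%:Z.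
Proof. elim: l => [|a l IH]; first by rewrite big_nil. by rewrite /= big_cons PoszD IH. Qed.

Lemma dot_cat u v n : dot (u ++ v) n = dot u n + dot v n.
Proof. by rewrite /dot big_cat. Qed.

Lemma dot_mstep u n : all (fun sc => good sc.1) u -> (3 <= n)%N ->
  dot (mstep u) n = dot u n.+1.
Proof.
move=> hg hn; elim: u hg => [|sc u IH] /=; first by rewrite /dot /mstep !big_nil.
case/andP => gs gu.
have -> : mstep (sc :: u) = [seq (unshift q, sc.2) | q <- walk 5 sc.1] ++ mstep u by [].
rewrite dot_cat /dot big_cons; congr (_ + _); last exact: IH.
rewrite big_map (R_walk 5); last by lia.
rewrite sumnZ mulr_sumr; apply: eq_big_seq => q hq.
by rewrite R_shift //; move/allP: gs => /(_ q hq).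
Qed.

Fixpoint ins (s : seq nat) (c : int) (l : seq (seq nat * int)) :=
  match l with
  | [::] => [:: (s, c)]
  | sc :: l' => if sc.1 == s then (sc.1, sc.2 + c) :: l' else sc :: ins s c l'
  end.
Definition norm (u : seq (seq nat * int)) :=
  foldr (fun sc acc => ins sc.1 sc.2 acc) [::] u.

Lemma dot_ins s c l n : dot (ins s c l) n = c * (R s n)%:Z + dot l n.
Proof.
elim: l => [|sc l IH] /=; first by rewrite /dot big_cons big_nil.
case: eqP => [e|_]; rewrite /dot !big_cons /=.
- by rewrite e mulrDl addrCA addrA.
- by rewrite -/(dot _ _) IH /dot addrCA.
Qed.

Lemma dot_norm u n : dot (norm u) n = dot u n.
Proof.
elim: u => [|sc u IH] //=. by rewrite dot_ins IH /dot big_cons.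
Qed.

Definition scale (c : int) (u : seq (seq nat * int)) := [seq (sc.1, c * sc.2) | sc <- u].
Lemma dot_scale c u n : dot (scale c u) n = c * dot u n.
Proof. by rewrite /dot big_map mulr_sumr; apply: eq_bigr => sc _; rewrite mulrA. Qed.


Definition u0 : seq (seq nat * int) := [:: (z5, 1)].
Definition us (j : nat) := iter j (fun u => norm (mstep u)) u0.

Lemma dot_us j L : (forall i, (i < j)%N -> all (fun sc => good sc.1) (us i)) -> (3 <= L)%N ->
  dot (us j) L = (R z5 (L + j))%:Z.
Proof.
elim: j L => [|j IH] L hg hL.
- by rewrite /dot big_cons big_nil mul1r addr0 addn0.
- rewrite /us iterS -/(us j) dot_norm dot_mstep //; last exact: hg.
  rewrite (IH L.+1); last (by lia); last by move=> i hi; apply: hg; lia.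
  by rewrite addSnnS.
Qed.
Local Open Scope ring_scope.

Lemma goods i : (i < 16)%N -> all (fun sc => good sc.1) (us i).
Proof.
have H : all (fun i => all (fun sc => good sc.1) (us i)) (iota 0 16) by vm_compute.
by move=> hi; move/allP: H => /(_ i); rewrite mem_iota add0n; apply.
Qed.

Definition wcomb := norm (us 16 ++ scale (-6) (us 12) ++ scale 6 (us 8) ++ scale (-4) (us 4) ++ us 0).

Lemma wcomb0 : all (fun sc => sc.2 == 0) wcomb.
Proof. by vm_compute. Qed.

Lemma dot_zero L u : all (fun sc => sc.2 == 0) u -> dot u L = 0.
Proof.
elim: u => [|sc u IH]; first by rewrite /dot big_nil.
case/andP => /eqP h hu; by rewrite /dot big_cons h mul0r add0r -/(dot u L) IH.
Qed.

Lemma recR_abs L (a b c d e : seq (seq nat * int)) :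
  dot a L = (R z5 (L + 16))%:Z -> dot b L = (R z5 (L + 12))%:Z ->
  dot c L = (R z5 (L + 8))%:Z -> dot d L = (R z5 (L + 4))%:Z ->
  dot e L = (R z5 (L + 0))%:Z ->
  all (fun sc => sc.2 == 0) (norm (a ++ scale (-6) b ++ scale 6 c ++ scale (-4) d ++ e)) ->
  (R z5 (L + 16))%:Z - 6 * (R z5 (L + 12))%:Z + 6 * (R z5 (L + 8))%:Z
  - 4 * (R z5 (L + 4))%:Z + (R z5 L)%:Z = 0.
Proof.
move=> ea eb ec ed ee /(dot_zero L).
rewrite dot_norm !dot_cat !dot_scale ea eb ec ed ee addn0 => <-.
ring.
Qed.

Lemma recR L : (3 <= L)%N ->
  (R z5 (L + 16))%:Z - 6 * (R z5 (L + 12))%:Z + 6 * (R z5 (L + 8))%:Z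
  - 4 * (R z5 (L + 4))%:Z + (R z5 L)%:Z = 0.
Proof.
move=> hL.
have g : forall j, (j <= 16)%N -> forall i, (i < j)%N -> all (fun sc => good sc.1) (us i).
  by move=> j hj i hi; apply: goods; lia.
exact: (recR_abs (dot_us (g 16 isT) hL) (dot_us (g 12 isT) hL) (dot_us (g 8 isT) hL)
                 (dot_us (g 4 isT) hL) (dot_us (g 0 isT) hL) wcomb0).
Qed.

Lemma smallR : [/\ R z5 0 = 1, R z5 4 = 3, R z5 8 = 15, R z5 12 = 75 & R z5 16 = 371]%N.
Proof. by split; vm_compute. Qed.
Local Open Scope ring_scope.

Lemma denom_coef k : denom`_k = (k == 0)%N%:R - 6 * (k == 5)%N%:R + 6 * (k == 10)%N%:R
   - 4 * (k == 15)%N%:R + (k == 20)%N%:R.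
Proof. by rewrite /denom !coefE. Qed.

Lemma numer_e : numer = 1 - 3%:R * 'X^5 + 3%:R * 'X^10 - 'X^15.
Proof. rewrite /numer. have e10 : 'X^10 = ('X^5 * 'X^5 : {poly int}) by rewrite -exprD.
have e15 : 'X^15 = ('X^5 * 'X^5 * 'X^5 : {poly int}) by rewrite -!exprD.
rewrite e10 e15; ring. Qed.

Lemma numer_coef k : numer`_k = (k == 0)%N%:R - 3 * (k == 5)%N%:R + 3 * (k == 10)%N%:R
   - (k == 15)%N%:R.
Proof. rewrite numer_e !mulr_natl !coefE. by case: eqP; case: eqP; case: eqP; case: eqP. Qed.

Lemma sum_pick M (j : nat) (c : int) (h : nat -> int) :
  \sum_(k < M) (c * ((k : nat) == j)%N%:R) * h k = if (j < M)%N then c * h j else 0.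
Proof.
elim: M => [|M IH]; first by rewrite big_ord0.
rewrite big_ord_recr /= IH.
case: eqP => [<-|ne]; first by rewrite ltnn mulr1 add0r ltnSn.
rewrite mulr0 mul0r addr0.
have -> : (j < M.+1)%N = (j < M)%N by move: ne; lia.
by [].
Qed.

Lemma sum_pick1 M (j : nat) (h : nat -> int) :
  \sum_(k < M) ((k : nat) == j)%N%:R * h k = if (j < M)%N then h j else 0.
Proof.
under eq_bigr do rewrite -(mul1r (_%:R)).
by rewrite sum_pick mul1r.
Qed.

Lemma conv (t : nat -> int) N : \sum_(k < N.+1) denom`_k * t (N - k)%N =
  t N - (if (5 < N.+1)%N then 6 * t (N - 5)%N else 0)
  + (if (10 < N.+1)%N then 6 * t (N - 10)%N else 0)
  - (if (15 < N.+1)%N then 4 * t (N - 15)%N else 0)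
  + (if (20 < N.+1)%N then t (N - 20)%N else 0).
Proof.
have te : forall k (x : int), denom`_k * x = (k == 0)%N%:R * x - (6 * (k == 5)%N%:R) * x
   + (6 * (k == 10)%N%:R) * x - (4 * (k == 15)%N%:R) * x + (k == 20)%N%:R * x.
  by move=> k x; rewrite denom_coef; ring.
under eq_bigr do rewrite te.
rewrite !big_split /= !sumrN.
rewrite (sum_pick1 _ 0 (fun k => t (N - k)%N)) (sum_pick _ 5 _ (fun k => t (N - k)%N)).
rewrite (sum_pick _ 10 _ (fun k => t (N - k)%N)) (sum_pick _ 15 _ (fun k => t (N - k)%N)).
by rewrite (sum_pick1 _ 20 (fun k => t (N - k)%N)) subn0.
Qed.

Lemma T5 q m : T14_5 (5 * q - 5 * m)%N = R z5 (4 * (q - m)).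
Proof.
rewrite T14_5_eq.
have -> : ((5 * q - 5 * m) %% 5 == 0)%N by lia.
by have -> : ((5 * q - 5 * m) %/ 5 = q - m)%N by lia.
Qed.

Theorem mainTheorem4 :
  forall N : nat,
    \sum_(k < N.+1) denom`_k * (T14_5 (N - k))%:Z = numer`_N.
Proof.
move=> N.
have := conv (fun n => (T14_5 n)%:Z) N; rewrite /= => ->.
rewrite numer_coef.
case: (boolP (N %% 5 == 0)%N) => hN; last first.
  have Z : forall j, (j <= N)%N -> (j %% 5 == 0)%N -> T14_5 (N - j) = 0%N.
    by move=> j hj h5; rewrite T14_5_eq; have -> : ((N - j) %% 5 == 0)%N = false by lia.
  rewrite -[in T14_5 N](subn0 N) (Z 0%N) //.
  have -> : (N == 0)%N = false by lia.
  have -> : (N == 5)%N = false by lia.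
  have -> : (N == 10)%N = false by lia.
  have -> : (N == 15)%N = false by lia.
  have -> : (if (5 < N.+1)%N then 6 * (T14_5 (N - 5))%:Z else 0) = 0.
    by case: ifP => // h; rewrite Z ?mulr0 //; lia.
  have -> : (if (10 < N.+1)%N then 6 * (T14_5 (N - 10))%:Z else 0) = 0.
    by case: ifP => // h; rewrite Z ?mulr0 //; lia.
  have -> : (if (15 < N.+1)%N then 4 * (T14_5 (N - 15))%:Z else 0) = 0.
    by case: ifP => // h; rewrite Z ?mulr0 //; lia.
  have -> : (if (20 < N.+1)%N then (T14_5 (N - 20))%:Z else 0) = 0.
    by case: ifP => // h; rewrite Z //; lia.
  by rewrite ?mulr0 ?subr0 ?addr0.
have [q ->] : exists q, N = (5 * q)%N by exists (N %/ 5)%N; lia.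
have e0 : (5 * q = 5 * q - 5 * 0)%N by lia.
rewrite [in T14_5 (5 * q)]e0 -[(5 * q - 5)%N]/(5 * q - 5 * 1)%N.
rewrite -[(5 * q - 10)%N]/(5 * q - 5 * 2)%N -[(5 * q - 15)%N]/(5 * q - 5 * 3)%N.
rewrite -[(5 * q - 20)%N]/(5 * q - 5 * 4)%N !T5 subn0.
clear e0; have := smallR => -[r0 r4 r8 r12 r16].
case: q => [|[|[|[|[|q]]]]].
- by rewrite /= r0.
- by rewrite /= r0 r4.
- by rewrite /= r0 r4 r8.
- by rewrite /= r0 r4 r8 r12.
- by rewrite /= r0 r4 r8 r12 r16.
- have hL : (3 <= 4 * q.+1)%N by lia.
  have := recR hL.
  have -> : (4 * q.+1 + 16 = 4 * q.+4.+1)%N by lia.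
  have -> : (4 * q.+1 + 12 = 4 * (q.+4.+1 - 1))%N by lia.
  have -> : (4 * q.+1 + 8 = 4 * (q.+4.+1 - 2))%N by lia.
  have -> : (4 * q.+1 + 4 = 4 * (q.+4.+1 - 3))%N by lia.
  have -> : (4 * q.+1 = 4 * (q.+4.+1 - 4))%N by lia.
  move=> E.
  have -> : (5 * q.+4.+1 == 0)%N = false by lia.
  have -> : (5 * q.+4.+1 == 5)%N = false by lia.
  have -> : (5 * q.+4.+1 == 10)%N = false by lia.
  have -> : (5 * q.+4.+1 == 15)%N = false by lia.
  have -> : (5 < (5 * q.+4.+1).+1)%N by lia.
  have -> : (10 < (5 * q.+4.+1).+1)%N by lia.
  have -> : (15 < (5 * q.+4.+1).+1)%N by lia.
  have -> : (20 < (5 * q.+4.+1).+1)%N by lia.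
  by rewrite E /=; ring.
Qed.
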